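(* Let $\mathcal A$ be an abelian category and $\mathcal T$ a full subcategory consisting of projective objects, closed under finite direct sums and direct summands. The following are equivalent: (1) $\underline{\mathcal A}=\mathcal A/\langle\mathcal T\rangle$ is balanced; (2) if $\mu:K\to X$ is a non-split monomorphism which factors through an object of $\mathcal T$, then there is a morphism $h:X\to T'$ with $T'\in\mathcal T$ such that no morphism $\tilde h:X\to(h\mu)(K)$ coincides with $h$ on $K$; (3) if $\mu:T\to X$ is a non-split monomorphism with $T\in\mathcal T$, then there is a morphism $h:X\to T'$ with $T'\in\mathcal T$ such that no morphism $\tilde h:X\to(h\mu)(T)$ coincides with $h$ on $T$; (4) every epimorphism $f:X\to Y$ satisfying (i) $f^k:\ker(f)\to X$ factors through an object of $\mathcal T$, and (ii) for every $h:X\to T$ with $T\in\mathcal T$ the canonical epimorphism $\ker(f)\twoheadrightarrow h(\ker f)$ factors through $f^k$, is a retraction; (5) for every non-split epimorphism $f:X\to Y$ with $\ker(f)\in\mathcal T$ there is a morphism $h:X\to T'$ with $T'\in\mathcal T$ such that for every morphism $g:Y\to T'$ the subobject $\ker(f)+\ker(h-gf)$ of $X$ is strictly contained in $X$.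
   Context: $\underline{\mathcal A}=\mathcal A/\langle\mathcal T\rangle$ is the stable category (same objects, morphisms modulo those factoring through an object of $\mathcal T$). A category is balanced if every morphism that is both a monomorphism and an epimorphism is an isomorphism. For a subobject $\kappa:K\hookrightarrow X$ and a morphism $h:X\to T$, $h(K)$ denotes the image of $h\kappa$ with canonical inclusion $j:h(K)\hookrightarrow T$, and $(h\mu)(K)$ the image of $h\mu$; a morphism $\tilde h:X\to h(K)$ coincides with $h$ on $K$ if $j\tilde h\kappa=h\kappa$. $f^k$ denotes the kernel morphism of $f$. *)

(* Defs.v *)
From HB Require Import structures.
From mathcomp Require Import all_boot all_algebra.
Set Implicit Arguments. Unset Strict Implicit. Unset Printing Implicit Defensive.
Import GRing.Theory.
Local Open Scope ring_scope.

Record PreAdd := {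
  Ob :> Type;
  Mor : Ob -> Ob -> zmodType;
  comp : forall X Y Z : Ob, Mor Y Z -> Mor X Y -> Mor X Z;
  idm : forall X : Ob, Mor X X;
  compA : forall X Y Z W (h : Mor Z W) (g : Mor Y Z) (f : Mor X Y),
      comp h (comp g f) = comp (comp h g) f;
  comp1l : forall X Y (f : Mor X Y), comp (idm Y) f = f;
  comp1r : forall X Y (f : Mor X Y), comp f (idm X) = f;
  compDl : forall X Y Z (g1 g2 : Mor Y Z) (f : Mor X Y),
      comp (g1 + g2) f = comp g1 f + comp g2 f;
  compDr : forall X Y Z (g : Mor Y Z) (f1 f2 : Mor X Y),
      comp g (f1 + f2) = comp g f1 + comp g f2
}.
Arguments Mor {C} X Y : rename.
Arguments comp {C X Y Z} g f : rename.
Arguments idm {C} X : rename.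

Notation "g ∘ f" := (comp g f) (at level 40, left associativity).

Section Defs.
Variable C : PreAdd.

Definition mono {X Y : C} (f : Mor X Y) : Prop :=
  forall W (g1 g2 : Mor W X), f ∘ g1 = f ∘ g2 -> g1 = g2.
Definition epi {X Y : C} (f : Mor X Y) : Prop :=
  forall W (g1 g2 : Mor Y W), g1 ∘ f = g2 ∘ f -> g1 = g2.
Definition iso {X Y : C} (f : Mor X Y) : Prop :=
  exists g : Mor Y X, g ∘ f = idm X /\ f ∘ g = idm Y.
Definition split_mono {X Y : C} (f : Mor X Y) : Prop :=
  exists r : Mor Y X, r ∘ f = idm X.
Definition retraction {X Y : C} (f : Mor X Y) : Prop :=
  exists s : Mor Y X, f ∘ s = idm Y.

Definition is_zero_obj (Z : C) : Prop :=
  (forall X (f : Mor Z X), f = 0) /\ (forall X (f : Mor X Z), f = 0).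

Definition is_biprod (X Y P : C) (i1 : Mor X P) (i2 : Mor Y P)
    (p1 : Mor P X) (p2 : Mor P Y) : Prop :=
  [/\ p1 ∘ i1 = idm X, p2 ∘ i2 = idm Y, p1 ∘ i2 = 0, p2 ∘ i1 = 0
    & i1 ∘ p1 + i2 ∘ p2 = idm P].

Definition is_kernel {X Y K : C} (f : Mor X Y) (k : Mor K X) : Prop :=
  f ∘ k = 0 /\
  forall W (g : Mor W X), f ∘ g = 0 -> exists! u : Mor W K, k ∘ u = g.
Definition is_cokernel {X Y Q : C} (f : Mor X Y) (q : Mor Y Q) : Prop :=
  q ∘ f = 0 /\
  forall W (g : Mor Y W), g ∘ f = 0 -> exists! u : Mor Q W, u ∘ q = g.

Definition abelian : Prop :=
  (exists Z : C, is_zero_obj Z) /\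
  [/\ (forall X Y : C, exists P i1 i2 p1 p2, @is_biprod X Y P i1 i2 p1 p2),
      (forall (X Y : C) (f : Mor X Y), exists K (k : Mor K X), is_kernel f k),
      (forall (X Y : C) (f : Mor X Y), exists Q (q : Mor Y Q), is_cokernel f q),
      (forall (X Y : C) (f : Mor X Y), mono f ->
         exists Z (g : Mor Y Z), is_kernel g f)
    & (forall (X Y : C) (f : Mor X Y), epi f ->
         exists Z (g : Mor Z X), is_cokernel g f)].

Definition projective (P : C) : Prop :=
  forall (X Y : C) (e : Mor X Y), epi e ->
    forall g : Mor P Y, exists u : Mor P X, e ∘ u = g.

Definition image_fact {X Y I : C} (f : Mor X Y) (e : Mor X I) (j : Mor I Y)
  : Prop := [/\ mono j, epi e & f = j ∘ e].

Variable T : C -> Prop.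

Definition factors_through_T {X Y : C} (f : Mor X Y) : Prop :=
  exists (T0 : C) (a : Mor X T0) (b : Mor T0 Y), T T0 /\ f = b ∘ a.

(* Equality of morphisms in the stable category A / <T>. *)
Definition st_eq {X Y : C} (f g : Mor X Y) : Prop := factors_through_T (f - g).

Definition st_mono {X Y : C} (f : Mor X Y) : Prop :=
  forall W (g1 g2 : Mor W X), st_eq (f ∘ g1) (f ∘ g2) -> st_eq g1 g2.
Definition st_epi {X Y : C} (f : Mor X Y) : Prop :=
  forall W (g1 g2 : Mor Y W), st_eq (g1 ∘ f) (g2 ∘ f) -> st_eq g1 g2.
Definition st_iso {X Y : C} (f : Mor X Y) : Prop :=
  exists g : Mor Y X, st_eq (g ∘ f) (idm X) /\ st_eq (f ∘ g) (idm Y).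

Definition stable_balanced : Prop :=
  forall (X Y : C) (f : Mor X Y), st_mono f -> st_epi f -> st_iso f.

End Defs.

(* Main.v *)
Require Import Defs.
From mathcomp Require Import all_boot ssralg.
From Stdlib Require Import Classical.
Import GRing.Theory.
Local Open Scope ring_scope.
Set Implicit Arguments. Unset Strict Implicit.

Section Basic.
Variable C : PreAdd.
Local Notation compA := (@Defs.compA C).
Implicit Types X Y Z W : C.

Lemma comp0l X Y Z (f : Mor X Y) : (0 : Mor Y Z) ∘ f = 0.
Proof. by apply: (addrI ((0 : Mor Y Z) ∘ f)); rewrite -compDl !addr0. Qed.
Lemma comp0r X Y Z (g : Mor Y Z) : g ∘ (0 : Mor X Y) = 0.
Proof. by apply: (addrI (g ∘ (0 : Mor X Y))); rewrite -compDr !addr0. Qed.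
Lemma compNl X Y Z (g : Mor Y Z) (f : Mor X Y) : (- g) ∘ f = - (g ∘ f).
Proof. by apply: (addrI (g ∘ f)); rewrite -compDl !subrr comp0l. Qed.
Lemma compNr X Y Z (g : Mor Y Z) (f : Mor X Y) : g ∘ (- f) = - (g ∘ f).
Proof. by apply: (addrI (g ∘ f)); rewrite -compDr !subrr comp0r. Qed.
Lemma compBl X Y Z (g1 g2 : Mor Y Z) (f : Mor X Y) : (g1 - g2) ∘ f = g1 ∘ f - g2 ∘ f.
Proof. by rewrite compDl compNl. Qed.
Lemma compBr X Y Z (g : Mor Y Z) (f1 f2 : Mor X Y) : g ∘ (f1 - f2) = g ∘ f1 - g ∘ f2.
Proof. by rewrite compDr compNr. Qed.

Lemma mono0 X Y (f : Mor X Y) :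
  (forall W (g : Mor W X), f ∘ g = 0 -> g = 0) -> mono f.
Proof.
move=> H W g1 g2 E; apply/eqP; rewrite -subr_eq0; apply/eqP; apply: H.
by rewrite compBr E subrr.
Qed.
Lemma epi0 X Y (f : Mor X Y) :
  (forall W (g : Mor Y W), g ∘ f = 0 -> g = 0) -> epi f.
Proof.
move=> H W g1 g2 E; apply/eqP; rewrite -subr_eq0; apply/eqP; apply: H.
by rewrite compBl E subrr.
Qed.
Lemma mono_0 X Y (f : Mor X Y) W (g : Mor W X) : mono f -> f ∘ g = 0 -> g = 0.
Proof. by move=> Hm E; apply: Hm; rewrite E comp0r. Qed.
Lemma epi_0 X Y (f : Mor X Y) W (g : Mor Y W) : epi f -> g ∘ f = 0 -> g = 0.
Proof. by move=> Hm E; apply: Hm; rewrite E comp0l. Qed.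

Lemma coker_epi X Y Q (f : Mor X Y) (q : Mor Y Q) : is_cokernel f q -> epi q.
Proof.
move=> [Hq Hu] W g1 g2 E.
have H0 : (g1 ∘ q) ∘ f = 0 by rewrite -compA Hq comp0r.
case: (Hu _ _ H0) => u [_ Hun].
by rewrite -(Hun g1 erefl) (Hun g2 (esym E)).
Qed.
Lemma ker_mono X Y K (f : Mor X Y) (k : Mor K X) : is_kernel f k -> mono k.
Proof.
move=> [Hk Hu] W g1 g2 E.
have H0 : f ∘ (k ∘ g1) = 0 by rewrite compA Hk comp0l.
case: (Hu _ _ H0) => u [_ Hun].
by rewrite -(Hun g1 erefl) (Hun g2 (esym E)).
Qed.

Hypothesis HC : abelian C.

Lemma mono_coker X Y Q (j : Mor X Y) (c : Mor Y Q) : mono j -> is_cokernel j c ->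
  forall W (w : Mor W Y), c ∘ w = 0 -> exists u, j ∘ u = w.
Proof.
move=> Hj [Hc Hcu] W w Hw.
case: HC => _ [_ _ _ Hmk _].
case: (Hmk _ _ j Hj) => Z [g [Hg Hgu]].
case: (Hcu _ g Hg) => v [Hv _].
have : g ∘ w = 0 by rewrite -Hv -compA Hw comp0r.
by case/Hgu=> u [Hu _]; exists u.
Qed.

Lemma epi_ker X Y K (f : Mor X Y) (k : Mor K X) : epi f ->
  (forall W (g : Mor W X), f ∘ g = 0 -> exists u, k ∘ u = g) ->
  forall W (w : Mor X W), w ∘ k = 0 -> exists u, u ∘ f = w.
Proof.
move=> Hf Hk W w Hw.
case: HC => _ [_ _ _ _ Hec].
case: (Hec _ _ f Hf) => Z [g [Hg Hgu]].
case: (Hk _ g Hg) => t Ht.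
have : w ∘ g = 0 by rewrite -Ht compA Hw comp0l.
by case/Hgu=> u [Hu _]; exists u.
Qed.

Lemma mono_epi_iso X Y (f : Mor X Y) : mono f -> epi f -> iso f.
Proof.
move=> Hm He.
case: HC => _ [_ _ _ _ Hec].
case: (Hec _ _ f He) => Z [g [Hg Hgu]].
have g0 : g = 0 by apply: (mono_0 Hm); exact: Hg.
have : idm X ∘ g = 0 by rewrite g0 comp0r.
case/Hgu=> u [Hu _]; exists u; split=> //.
apply: He; by rewrite -compA Hu comp1l comp1r.
Qed.

Lemma kernel_ex X Y (f : Mor X Y) W (g : Mor W X) K (k : Mor K X) :
  is_kernel f k -> f ∘ g = 0 -> exists u, k ∘ u = g.
Proof. by move=> [_ H] /H [u [Hu _]]; exists u. Qed.
Lemma coker_ex X Y (f : Mor X Y) W (g : Mor Y W) Q (q : Mor Y Q) :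
  is_cokernel f q -> g ∘ f = 0 -> exists u, u ∘ q = g.
Proof. by move=> [_ H] /H [u [Hu _]]; exists u. Qed.

Lemma image_ex X Y (f : Mor X Y) : exists I (e : Mor X I) (j : Mor I Y), image_fact f e j.
Proof.
case: HC => _ [_ Hker Hcok _ _].
case: (Hcok _ _ f) => Q [q Hq].
case: (Hker _ _ q) => I [j Hj].
case: (kernel_ex Hj (proj1 Hq)) => e He.
exists I, e, j; split; [exact: ker_mono Hj| |by []].
apply: epi0 => W g Hg.
case: (Hker _ _ g) => I' [k Hk].
case: (kernel_ex Hk Hg) => e' He'.
have Hjk : mono (j ∘ k).
  apply: mono0 => V h; rewrite -compA => /(mono_0 (ker_mono Hj)).
  exact: (mono_0 (ker_mono Hk)).
case: (Hcok _ _ (j ∘ k)) => Q2 [c Hc].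
have Hcf : c ∘ f = 0 by rewrite -He -He' (compA j) (compA c) (proj1 Hc) comp0l.
case: (coker_ex Hq Hcf) => t Ht.
have Hcj : c ∘ j = 0 by rewrite -Ht -compA (proj1 Hj) comp0r.
case: (mono_coker Hjk Hc Hcj) => s Hs.
have ks : k ∘ s = idm I.
  apply: (ker_mono Hj); by rewrite compA Hs comp1r.
by rewrite -(comp1r g) -ks compA (proj1 Hk) comp0l.
Qed.


Variable T : C -> Prop.
Hypothesis HTproj : forall X : C, T X -> projective X.
Hypothesis HT0 : forall Z : C, is_zero_obj Z -> T Z.
Hypothesis HTsum : forall (X Y P : C) (i1 : Mor X P) (i2 : Mor Y P)
              (p1 : Mor P X) (p2 : Mor P Y),
      T X -> T Y -> is_biprod i1 i2 p1 p2 -> T P.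

Local Notation ft := (factors_through_T T).

Lemma lift T0 X Y (e : Mor X Y) (g : Mor T0 Y) : T T0 -> epi e -> exists u, e ∘ u = g.
Proof. by move=> HT He; exact: (HTproj HT He g). Qed.

Lemma ft_compl X Y Z (g : Mor Y Z) (f : Mor X Y) : ft f -> ft (g ∘ f).
Proof. by move=> [T1 [a [b [H ->]]]]; exists T1, a, (g ∘ b); rewrite compA. Qed.
Lemma ft_compr X Y Z (g : Mor Y Z) (f : Mor X Y) : ft g -> ft (g ∘ f).
Proof. by move=> [T1 [a [b [H ->]]]]; exists T1, (a ∘ f), b; rewrite compA. Qed.
Lemma ft_via T1 X Y (a : Mor X T1) (b : Mor T1 Y) : T T1 -> ft (b ∘ a).
Proof. by move=> H; exists T1, a, b. Qed.
Lemma ft_opp X Y (f : Mor X Y) : ft f -> ft (- f).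
Proof. by move=> [T1 [a [b [H ->]]]]; exists T1, a, (- b); rewrite compNl. Qed.
Lemma ft_add X Y (f g : Mor X Y) : ft f -> ft g -> ft (f + g).
Proof.
move=> [T1 [a1 [b1 [H1 ->]]]] [T2 [a2 [b2 [H2 ->]]]].
case: HC => _ [Hbp _ _ _ _]; case: (Hbp T1 T2) => P [i1 [i2 [p1 [p2 Hb]]]].
case: (Hb) => H11 H22 H12 H21 _.
exists P, (i1 ∘ a1 + i2 ∘ a2), (b1 ∘ p1 + b2 ∘ p2); split; first exact: (@HTsum _ _ _ _ _ _ _ H1 H2 Hb).
have B1 : (b1 ∘ p1 + b2 ∘ p2) ∘ i1 = b1 by rewrite compDl -!compA H11 H21 comp1r comp0r addr0.
have B2 : (b1 ∘ p1 + b2 ∘ p2) ∘ i2 = b2 by rewrite compDl -!compA H12 H22 comp1r comp0r add0r.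
by rewrite compDr !compA B1 B2.
Qed.
Lemma ft_sub X Y (f g : Mor X Y) : ft f -> ft g -> ft (f - g).
Proof. by move=> Hf Hg; apply: ft_add Hf (ft_opp Hg). Qed.
Lemma ft0 X Y : ft (0 : Mor X Y).
Proof.
case: HC => [[Z HZ] _]; exists Z, 0, 0; split; first exact: HT0.
by rewrite comp0l.
Qed.

Lemma st_mono_of X Y (f : Mor X Y) :
  (forall W (d : Mor W X), ft (f ∘ d) -> ft d) -> st_mono T f.
Proof. by move=> H W g1 g2; rewrite /st_eq -compBr; apply: H. Qed.
Lemma st_epi_of X Y (f : Mor X Y) :
  (forall W (d : Mor Y W), ft (d ∘ f) -> ft d) -> st_epi T f.
Proof. by move=> H W g1 g2; rewrite /st_eq -compBl; apply: H. Qed.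
Lemma st_mono_use X Y (f : Mor X Y) W (d : Mor W X) : st_mono T f -> ft (f ∘ d) -> ft d.
Proof.
move=> H Hd; have := H W d 0; rewrite /st_eq comp0r !subr0; exact.
Qed.
Lemma st_epi_use X Y (f : Mor X Y) W (d : Mor Y W) : st_epi T f -> ft (d ∘ f) -> ft d.
Proof.
move=> H Hd; have := H W d 0; rewrite /st_eq comp0l !subr0; exact.
Qed.

Lemma L_stmono X Y (f : Mor X Y) : epi f ->
  (forall W (w : Mor W X), f ∘ w = 0 -> ft w) -> st_mono T f.
Proof.
move=> Hf H; apply: st_mono_of => W d [T1 [a [b [HT1 E]]]].
case: (lift b HT1 Hf) => b' Hb'.
have : f ∘ (d - b' ∘ a) = 0 by rewrite compBr E compA Hb' subrr.
move/H => Hd.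
have -> : d = (d - b' ∘ a) + b' ∘ a by rewrite subrK.
by apply: ft_add Hd (ft_via _ _ HT1).
Qed.

Lemma L_stepi X Y K (f : Mor X Y) (m : Mor K X) : epi f -> f ∘ m = 0 ->
  (forall W (w : Mor X W), w ∘ m = 0 -> exists u, u ∘ f = w) ->
  (forall T1 (a : Mor X T1), T T1 -> exists I (e : Mor K I) (j : Mor I T1),
      image_fact (a ∘ m) e j /\ exists ht : Mor X I, j ∘ ht ∘ m = a ∘ m) ->
  st_epi T f.
Proof.
move=> Hf Hfm Hcok Hext; apply: st_epi_of => W g [T1 [a [b [HT1 E]]]].
case: (Hext _ a HT1) => I [e [j [[Hj He Hae] [ht Hht]]]].
have : (a - j ∘ ht) ∘ m = 0 by rewrite compBl Hht subrr.
case/Hcok => h' Hh'.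
have bj : b ∘ j = 0.
  apply: (epi_0 He); by rewrite -compA -Hae compA -E -compA Hfm comp0r.
exists T1, h', b; split=> //.
apply: Hf; by rewrite E -compA Hh' compBr compA bj comp0l subr0.
Qed.

Lemma L_retr X Y (f : Mor X Y) (v : Mor Y X) : epi f -> st_eq T (f ∘ v) (idm Y) ->
  retraction f.
Proof.
move=> Hf [T1 [a [b [HT1 E]]]].
case: (lift b HT1 Hf) => b' Hb'.
exists (v - b' ∘ a); by rewrite compBr compA Hb' -E opprB addrC subrK.
Qed.


Definition cond2 :=
    forall (K X : C) (mu : Mor K X), mono mu -> ~ split_mono mu ->
      factors_through_T T mu ->
      exists (T' : C) (h : Mor X T'), T T' /\
        forall (I : C) (e : Mor K I) (j : Mor I T'), image_fact (h ∘ mu) e j ->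
          forall ht : Mor X I, j ∘ ht ∘ mu <> h ∘ mu.
Definition cond3 :=
    forall (T0 X : C) (mu : Mor T0 X), T T0 -> mono mu -> ~ split_mono mu ->
      exists (T' : C) (h : Mor X T'), T T' /\
        forall (I : C) (e : Mor T0 I) (j : Mor I T'), image_fact (h ∘ mu) e j ->
          forall ht : Mor X I, j ∘ ht ∘ mu <> h ∘ mu.
Definition cond4 :=
    forall (X Y K : C) (f : Mor X Y) (k : Mor K X), epi f -> is_kernel f k ->
      factors_through_T T k ->
      (forall (T0 : C) (h : Mor X T0), T T0 ->
         forall (I : C) (e : Mor K I) (j : Mor I T0), image_fact (h ∘ k) e j ->
           exists u : Mor X I, u ∘ k = e) ->
      retraction f.
Definition cond5 :=
    forall (X Y K : C) (f : Mor X Y) (k : Mor K X), epi f -> ~ retraction f ->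
      is_kernel f k -> T K ->
      exists (T' : C) (h : Mor X T'), T T' /\
        forall (g : Mor Y T') (K2 : C) (k2 : Mor K2 X), is_kernel (h - g ∘ f) k2 ->
          forall (P : C) (i1 : Mor K P) (i2 : Mor K2 P) (p1 : Mor P K)
                 (p2 : Mor P K2), is_biprod i1 i2 p1 p2 ->
          forall (I : C) (e : Mor P I) (j : Mor I X),
            image_fact (k ∘ p1 + k2 ∘ p2) e j -> ~ iso j.

Lemma imp12 : stable_balanced T -> cond2.
Proof.
move=> H1 K X mu Hmu Hns [T2 [al [be [HT2 Emu]]]].
apply: NNPP => Hno.
have Hext : forall T1 (a : Mor X T1), T T1 -> exists I (e : Mor K I) (j : Mor I T1),
    image_fact (a ∘ mu) e j /\ exists ht : Mor X I, j ∘ ht ∘ mu = a ∘ mu.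
  move=> T1 a HT1; apply: NNPP => Hn; apply: Hno; exists T1, a; split => // I e j Hi ht Ht.
  by apply: Hn; exists I, e, j; split=> //; exists ht.
case: HC => _ [_ _ Hcok _ _].
case: (Hcok _ _ mu) => Q [pi Hpi].
have piepi := coker_epi Hpi.
have Hsm : st_mono T pi.
  apply: L_stmono => // W w Hw.
  case: (mono_coker Hmu Hpi Hw) => c <-.
  by rewrite Emu -compA; apply: ft_via.
have Hse : st_epi T pi.
  apply: (L_stepi piepi (proj1 Hpi) _ Hext) => W w Hw; exact: coker_ex Hpi Hw.
case: (H1 _ _ _ Hsm Hse) => s [[T1 [a [b [HT1 E]]]] _].
have Emu2 : mu = (- b) ∘ (a ∘ mu).
  by rewrite compNl compA -E compBl -compA (proj1 Hpi) comp0r comp1l sub0r opprK.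
case: (Hext _ a HT1) => I [e [j [[Hj He Hae] [ht Hht]]]].
have htmu : ht ∘ mu = e by apply: Hj; rewrite compA Hht Hae.
have emono : mono e.
  apply: mono0 => V g Hg; apply: (mono_0 Hmu).
  by rewrite Emu2 Hae -!compA Hg !comp0r.
case: (mono_epi_iso emono He) => ei [Hei _].
by apply: Hns; exists (ei ∘ ht); rewrite -compA htmu.
Qed.

Lemma imp23 : cond2 -> cond3.
Proof.
move=> H2 T0 X mu HT Hm Hns; apply: H2 => //.
by exists T0, (idm T0), mu; split=> //; rewrite comp1r.
Qed.


Lemma imp34 : cond3 -> cond4.
Proof.
move=> H3 X Y K f k Hf Hk [T1 [al [be [HT1 Ek]]]] Hii.
have Hext : forall T2 (a : Mor X T2), T T2 -> exists I (e : Mor K I) (j : Mor I T2),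
    image_fact (a ∘ k) e j /\ exists ht : Mor X I, j ∘ ht ∘ k = a ∘ k.
  move=> T2 a HT2; case: (image_ex (a ∘ k)) => I [e [j Hi]]; exists I, e, j; split=> //.
  case: (Hii _ a HT2 _ _ _ Hi) => u Hu; exists u; case: Hi => _ _ ->.
  by rewrite -compA Hu.
have Hcok : forall W (w : Mor X W), w ∘ k = 0 -> exists u, u ∘ f = w.
  exact: (epi_ker Hf (fun W g H => kernel_ex Hk H)).
have Hse := L_stepi Hf (proj1 Hk) Hcok Hext.
case: HC => _ [Hbp _ Hcokex _ _].
case: (Hbp X T1) => P [i1 [i2 [p1 [p2 Hb]]]].
case: (Hb) => H11 H22 H12 H21 Hid.
set phi := i1 ∘ k - i2 ∘ al.
case: (Hcokex _ _ phi) => X' [q Hq].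
have Hp1phi : p1 ∘ phi = k by rewrite /phi compBr !compA H11 H12 comp1l comp0l subr0.
have phimono : mono phi.
  apply: mono0 => W g Hg; apply: (mono_0 (ker_mono Hk)).
  by rewrite -Hp1phi -compA Hg comp0r.
set mu' := q ∘ i2.
have : (f ∘ p1) ∘ phi = 0 by rewrite -compA Hp1phi (proj1 Hk).
case/(coker_ex Hq) => f2 Hf2.
have mu'mono : mono mu'.
  apply: mono0 => W g Hg.
  have : q ∘ (i2 ∘ g) = 0 by rewrite compA.
  case/(mono_coker phimono Hq) => t Ht.
  have kt : k ∘ t = 0 by rewrite -Hp1phi -compA Ht compA H12 comp0l.
  have t0 := mono_0 (ker_mono Hk) kt.
  have i2g : i2 ∘ g = 0 by rewrite -Ht t0 comp0r.
  by rewrite -(comp1l g) -H22 -compA i2g comp0r.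
have f2mu : f2 ∘ mu' = 0 by rewrite /mu' compA Hf2 -compA H12 comp0r.
have f2i : f2 ∘ (q ∘ i1) = f by rewrite compA Hf2 -compA H11 comp1r.
have Hqk : q ∘ i1 ∘ k = mu' ∘ al.
  have := proj1 Hq; rewrite /phi compBr => /subr0_eq.
  by rewrite /mu' !compA.
have Hc2 : forall W (w : Mor X' W), w ∘ mu' = 0 -> exists g, g ∘ f2 = w.
  move=> W w Hw.
  have : (w ∘ (q ∘ i1)) ∘ k = 0 by rewrite -compA Hqk compA Hw comp0l.
  case/Hcok => g Hg; exists g.
  apply: (coker_epi Hq); rewrite -compA Hf2.
  have -> : w ∘ q = (w ∘ (q ∘ i1)) ∘ p1 + (w ∘ (q ∘ i2)) ∘ p2.
    by rewrite -!compA -!compDr Hid comp1r.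
  by rewrite -/mu' Hw comp0l addr0 -Hg -compA.
have : split_mono mu'.
  apply: NNPP => Hns.
  case: (H3 T1 X' mu' HT1 mu'mono Hns) => T' [h [HT' H3']].
  case: (image_ex (h ∘ mu')) => I [e [j Hi]].
  case: (Hi) => Hj He Hhe.
  case: (Hcokex _ _ j) => Qc [c Hc].
  have : (c ∘ h) ∘ mu' = 0 by rewrite -compA Hhe compA (proj1 Hc) comp0l.
  case/Hc2 => g Hg.
  have : ft (g ∘ f) by rewrite -f2i compA Hg -compA; apply: ft_via.
  case/(st_epi_use Hse) => T3 [a0 [b [HT3 Eg]]].
  case: (lift b HT3 (coker_epi Hc)) => b' Hb'.
  have : c ∘ (h - b' ∘ a0 ∘ f2) = 0 by rewrite compBr !compA Hb' -Eg Hg subrr.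
  case/(mono_coker Hj Hc) => ht Hht.
  apply: (H3' I e j Hi ht).
  by rewrite Hht compBl -!compA f2mu !comp0r subr0.
case=> r Hr.
set a := r ∘ (q ∘ i1).
have ak : a ∘ k = al by rewrite /a -compA Hqk compA Hr comp1l.
have : (idm X - be ∘ a) ∘ k = 0 by rewrite compBl comp1l -compA ak -Ek subrr.
case/Hcok => v Hv.
apply: (L_retr (v := v) Hf); apply: Hse; rewrite /st_eq.
rewrite -compA Hv compBr comp1r comp1l addrAC subrr add0r.
by apply: ft_opp; rewrite compA; apply: ft_via.
Qed.


Lemma imp41 : cond4 -> stable_balanced T.
Proof.
move=> H4 X Y f Hsm Hse.
case: HC => _ [Hbp Hkerex Hcokex _ _].
case: (Hcokex _ _ f) => Q [q0 Hq0].
have : ft (q0 ∘ f) by rewrite (proj1 Hq0); apply: ft0.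
case/(st_epi_use Hse) => T1 [a [b [HT1 Eq0]]].
case: (lift b HT1 (coker_epi Hq0)) => c Hc.
case: (Hbp X T1) => P [i1 [i2 [p1 [p2 Hb]]]].
case: (Hb) => H11 H22 H12 H21 Hid.
set f' := f ∘ p1 + c ∘ p2.
have f'i1 : f' ∘ i1 = f by rewrite /f' compDl -!compA H11 H21 comp1r comp0r addr0.
have f'i2 : f' ∘ i2 = c by rewrite /f' compDl -!compA H12 H22 comp1r comp0r add0r.
have bepi : epi b.
  apply: epi0 => W u Hu; apply: (epi_0 (coker_epi Hq0)).
  by rewrite Eq0 compA Hu comp0l.
have f'epi : epi f'.
  apply: epi0 => W g Hg.
  have gf : g ∘ f = 0 by rewrite -f'i1 compA Hg comp0l.
  have gc : g ∘ c = 0 by rewrite -f'i2 compA Hg comp0l.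
  case: (coker_ex Hq0 gf) => u Hu.
  have : u ∘ b = 0 by rewrite -Hc compA Hu gc.
  by move/(epi_0 bepi) => u0; rewrite -Hu u0 comp0l.
case: (Hkerex _ _ f') => K' [k' Hk'].
have k'fac : ft k'.
  have E : f ∘ (p1 ∘ k') = - (c ∘ (p2 ∘ k')).
    apply/eqP; rewrite -addr_eq0 !compA -compDl; apply/eqP; exact: (proj1 Hk').
  have H1 : ft (p1 ∘ k').
    apply: (st_mono_use Hsm); rewrite E; apply: ft_opp; exact: ft_via.
  have -> : k' = i1 ∘ (p1 ∘ k') + i2 ∘ (p2 ∘ k') by rewrite !compA -compDl Hid comp1l.
  by apply: ft_add; [apply: ft_compl; exact: H1 | apply: ft_via].
have Hii : forall (T0 : C) (h : Mor P T0), T T0 ->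
         forall (I : C) (e : Mor K' I) (j : Mor I T0), image_fact (h ∘ k') e j ->
           exists u : Mor P I, u ∘ k' = e.
  move=> T0 h HT0' I e j [Hj He Hhe].
  case: (Hcokex _ _ j) => Qc [c' Hc'].
  have : (c' ∘ h) ∘ k' = 0 by rewrite -compA Hhe compA (proj1 Hc') comp0l.
  case/(epi_ker f'epi (fun W g H => kernel_ex Hk' H)) => g Hg.
  have : ft (g ∘ f) by rewrite -f'i1 compA Hg -compA; apply: ft_via.
  case/(st_epi_use Hse) => T3 [a2 [b2 [HT3 Eg]]].
  case: (lift b2 HT3 (coker_epi Hc')) => b2' Hb2'.
  have : c' ∘ (h - b2' ∘ a2 ∘ f') = 0 by rewrite compBr !compA Hb2' -Eg Hg subrr.
  case/(mono_coker Hj Hc') => u Hu; exists u.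
  apply: Hj; by rewrite compA Hu compBl -!compA (proj1 Hk') !comp0r subr0 Hhe.
case: (H4 P Y K' f' k' f'epi Hk' k'fac Hii) => s Hs.
exists (p1 ∘ s); split.
- have : f' ∘ (s ∘ f' - idm P) = 0 by rewrite compBr compA Hs comp1l comp1r subrr.
  case/(kernel_ex Hk') => t Ht.
  have Hf : ft (s ∘ f' - idm P) by rewrite -Ht; apply: ft_compr.
  rewrite /st_eq.
  have -> : (p1 ∘ s) ∘ f - idm X = (p1 ∘ (s ∘ f' - idm P)) ∘ i1.
    by rewrite compBr compBl comp1r H11 -!compA f'i1.
  by apply: ft_compr; apply: ft_compl.
- rewrite /st_eq.
  have E : f ∘ p1 = f' - c ∘ p2 by rewrite /f' addrK.
  rewrite compA E compBl Hs -compA addrAC subrr add0r.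
  by apply: ft_opp; apply: ft_via.
Qed.

Lemma imp15 : stable_balanced T -> cond5.
Proof.
move=> H1 X Y K f k Hf Hnr Hk HTK; apply: NNPP => Hno.
have Hext5 : forall T' (h : Mor X T'), T T' -> exists (g : Mor Y T') K2 (k2 : Mor K2 X),
    is_kernel (h - g ∘ f) k2 /\ exists P (i1 : Mor K P) (i2 : Mor K2 P) p1 p2,
    is_biprod i1 i2 p1 p2 /\ exists I (e : Mor P I) (j : Mor I X),
    image_fact (k ∘ p1 + k2 ∘ p2) e j /\ iso j.
  move=> T' h HT'; apply: NNPP => Hn; apply: Hno; exists T', h; split=> //.
  move=> g K2 k2 Hk2 P i1 i2 p1 p2 Hb I e j Hi Hiso; apply: Hn.
  exists g, K2, k2; split=> //; exists P, i1, i2, p1, p2; split=> //.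
  by exists I, e, j.
have Hsm : st_mono T f.
  apply: L_stmono => // W w Hw; case: (kernel_ex Hk Hw) => u <-; exact: ft_via.
have Hse : st_epi T f.
  apply: st_epi_of => W g0 [T1 [a [b [HT1 E]]]].
  case: (Hext5 _ a HT1) => g [K2 [k2 [Hk2 [P [i1 [i2 [p1 [p2 [Hb [I [e [j [[Hj He Hie] [ji [_ Hji]]]]]]]]]]]]]]].
  have bk : (b ∘ (a - g ∘ f)) ∘ k = 0.
    by rewrite compBr compBl -E -!compA (proj1 Hk) !comp0r subrr.
  have bk2 : (b ∘ (a - g ∘ f)) ∘ k2 = 0 by rewrite -compA (proj1 Hk2) comp0r.
  have bj : (b ∘ (a - g ∘ f)) ∘ j = 0.
    apply: (epi_0 He); by rewrite -compA -Hie compDr !compA bk bk2 !comp0l addr0.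
  have b0 : b ∘ (a - g ∘ f) = 0 by rewrite -(comp1r (b ∘ _)) -Hji compA bj comp0l.
  exists T1, g, b; split=> //.
  apply: Hf; rewrite E -compA; move: b0; rewrite compBr; exact: subr0_eq.
case: (H1 _ _ _ Hsm Hse) => s [_ Hs].
by apply: Hnr; apply: (L_retr Hf Hs).
Qed.

Lemma imp53 : cond5 -> cond3.
Proof.
move=> H5 T0 X mu HT Hm Hns.
case: HC => _ [Hbp Hkerex Hcokex _ _].
case: (Hcokex _ _ mu) => Q [pi Hpi].
have piepi := coker_epi Hpi.
have Hkerpi : is_kernel pi mu.
  split; first exact: (proj1 Hpi).
  move=> W g Hg; case: (mono_coker Hm Hpi Hg) => u Hu; exists u; split=> // u' Hu'.
  by apply: Hm; rewrite Hu Hu'.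
have Hnr : ~ retraction pi.
  move=> [s Hs]; apply: Hns.
  have : pi ∘ (idm X - s ∘ pi) = 0 by rewrite compBr compA Hs comp1l comp1r subrr.
  case/(mono_coker Hm Hpi) => r Hr; exists r.
  by apply: Hm; rewrite compA Hr compBl comp1l -compA (proj1 Hpi) comp0r subr0 comp1r.
case: (H5 X Q T0 pi mu piepi Hnr Hkerpi HT) => T' [h [HT' H5']].
exists T', h; split=> // I e j [Hj He Hhe] ht Hht.
have : (h - j ∘ ht) ∘ mu = 0 by rewrite compBl Hht subrr.
case/(coker_ex Hpi) => g Hg.
have Hphi : h - g ∘ pi = j ∘ ht by rewrite Hg subKr.
case: (Hkerex _ _ (h - g ∘ pi)) => K2 [k2 Hk2].
case: (Hbp T0 K2) => P [i1 [i2 [p1 [p2 Hb]]]].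
case: (Hb) => H11 H22 H12 H21 Hid.
case: (image_ex (mu ∘ p1 + k2 ∘ p2)) => I' [e' [j' Hi']].
apply: (H5' g K2 k2 Hk2 P i1 i2 p1 p2 Hb I' e' j' Hi').
case: (Hi') => Hj' He' Hie'.
apply: mono_epi_iso => //.
have htmu : ht ∘ mu = e by apply: Hj; rewrite compA Hht Hhe.
have htepi : epi ht.
  apply: epi0 => W v Hv; apply: (epi_0 He); by rewrite -htmu compA Hv comp0l.
have Hk2ht : forall W (g' : Mor W X), ht ∘ g' = 0 -> exists u, k2 ∘ u = g'.
  move=> W g' H; apply: (kernel_ex Hk2); by rewrite Hphi -compA H comp0r.
apply: epi0 => W w Hw.
have wsum : w ∘ (mu ∘ p1 + k2 ∘ p2) = 0 by rewrite Hie' compA Hw comp0l.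
have wmu : w ∘ mu = 0.
  have -> : w ∘ mu = (w ∘ (mu ∘ p1 + k2 ∘ p2)) ∘ i1.
    by rewrite -compA compDl -!compA H11 H21 comp1r comp0r addr0.
  by rewrite wsum comp0l.
have wk2 : w ∘ k2 = 0.
  have -> : w ∘ k2 = (w ∘ (mu ∘ p1 + k2 ∘ p2)) ∘ i2.
    by rewrite -compA compDl -!compA H12 H22 comp1r comp0r add0r.
  by rewrite wsum comp0l.
case: (epi_ker htepi Hk2ht wk2) => v Hv.
have : v ∘ e = 0 by rewrite -htmu compA Hv wmu.
by move/(epi_0 He) => v0; rewrite -Hv v0 comp0l.
Qed.

End Basic.

Theorem theorem4p6 (C : PreAdd) (HC : abelian C) (T : C -> Prop)
  (HTproj : forall X : C, T X -> projective X)
  (HT0 : forall Z : C, is_zero_obj Z -> T Z)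
  (HTsum : forall (X Y P : C) (i1 : Mor X P) (i2 : Mor Y P)
              (p1 : Mor P X) (p2 : Mor P Y),
      T X -> T Y -> is_biprod i1 i2 p1 p2 -> T P)
  (HTsummand : forall (X Y : C) (s : Mor X Y) (r : Mor Y X),
      T Y -> r ∘ s = idm X -> T X) :
  let cond1 := stable_balanced T in
  let cond2 :=
    forall (K X : C) (mu : Mor K X), mono mu -> ~ split_mono mu ->
      factors_through_T T mu ->
      exists (T' : C) (h : Mor X T'), T T' /\
        forall (I : C) (e : Mor K I) (j : Mor I T'), image_fact (h ∘ mu) e j ->
          forall ht : Mor X I, j ∘ ht ∘ mu <> h ∘ mu in
  let cond3 :=
    forall (T0 X : C) (mu : Mor T0 X), T T0 -> mono mu -> ~ split_mono mu ->
      exists (T' : C) (h : Mor X T'), T T' /\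
        forall (I : C) (e : Mor T0 I) (j : Mor I T'), image_fact (h ∘ mu) e j ->
          forall ht : Mor X I, j ∘ ht ∘ mu <> h ∘ mu in
  let cond4 :=
    forall (X Y K : C) (f : Mor X Y) (k : Mor K X), epi f -> is_kernel f k ->
      factors_through_T T k ->
      (forall (T0 : C) (h : Mor X T0), T T0 ->
         forall (I : C) (e : Mor K I) (j : Mor I T0), image_fact (h ∘ k) e j ->
           exists u : Mor X I, u ∘ k = e) ->
      retraction f in
  let cond5 :=
    forall (X Y K : C) (f : Mor X Y) (k : Mor K X), epi f -> ~ retraction f ->
      is_kernel f k -> T K ->
      exists (T' : C) (h : Mor X T'), T T' /\
        forall (g : Mor Y T') (K2 : C) (k2 : Mor K2 X), is_kernel (h - g ∘ f) k2 ->
          forall (P : C) (i1 : Mor K P) (i2 : Mor K2 P) (p1 : Mor P K)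
                 (p2 : Mor P K2), is_biprod i1 i2 p1 p2 ->
          forall (I : C) (e : Mor P I) (j : Mor I X),
            image_fact (k ∘ p1 + k2 ∘ p2) e j -> ~ iso j in
  [/\ cond1 <-> cond2, cond1 <-> cond3, cond1 <-> cond4 & cond1 <-> cond5].
Proof.
move=> c1 c2 c3 c4 c5.
have i12 : c1 -> c2 by eapply imp12; eassumption.
have i23 : c2 -> c3 by eapply imp23; eassumption.
have i34 : c3 -> c4 by eapply imp34; eassumption.
have i41 : c4 -> c1 by eapply imp41; eassumption.
have i15 : c1 -> c5 by eapply imp15; eassumption.
have i53 : c5 -> c3 by eapply imp53; eassumption.
by split; split; tauto.
Qed.
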